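(* Let $h:\mathcal S\to\mathbb R$ be bounded and $\lambda\in[0,1]$, defining the reshaped MDP $\widetilde{\mathcal M}$. For every policy $\pi$, every initial state distribution $d_0$ and every bounded $V:\mathcal S\to\mathbb R$, $$V(d_0)-V^\pi(d_0)=\frac{\gamma(1-\lambda)}{1-\gamma}\,\mathbb E_{(s,a)\sim d^\pi}\,\mathbb E_{s'\sim P(\cdot|s,a)}\big[h(s')-V(s')\big]+\lambda\big(V(d_0)-\widetilde V^\pi(d_0)\big)+\frac{1-\lambda}{1-\gamma}\big(V(d^\pi)-\widetilde V^\pi(d^\pi)\big).$$
   Context: Let $\mathcal M=(\mathcal S,\mathcal A,P,r,\gamma)$ be a discounted MDP with transition kernel $P(\cdot|s,a)$, reward $r:\mathcal S\times\mathcal A\to[0,1]$ and discount $\gamma\in[0,1)$. A policy $\pi$ is a Markov kernel from $\mathcal S$ to distributions on $\mathcal A$; $\rho^\pi(s)$ (resp. $\rho^\pi(d_0)$) is the trajectory law with $s_0=s$ (resp. $s_0\sim d_0$), $a_t\sim\pi(\cdot|s_t)$, $s_{t+1}\sim P(\cdot|s_t,a_t)$. $V^\pi(s)=\mathbb E_{\rho^\pi(s)}[\sum_t\gamma^tr(s_t,a_t)]$. For $V:\mathcal S\to\mathbb R$ and a distribution $d$, $V(d)=\mathbb E_{s\sim d}[V(s)]$. $d_t^\pi$ is the law of $s_t$ under $\rho^\pi(d_0)$, $d^\pi=(1-\gamma)\sum_t\gamma^td_t^\pi$, $d^\pi(s,a)=d^\pi(s)\pi(a|s)$. Reshaped MDP: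 $\widetilde{\mathcal M}=(\mathcal S,\mathcal A,P,\widetilde r,\lambda\gamma)$ with $\widetilde r(s,a)=r(s,a)+(1-\lambda)\gamma\,\mathbb E_{s'\sim P(\cdot|s,a)}[h(s')]$, and $\widetilde V^\pi(s)=\mathbb E_{\rho^\pi(s)}[\sum_t(\lambda\gamma)^t\widetilde r(s_t,a_t)]$. *)

(* Defs.v *)
From HB Require Import structures.
From mathcomp Require Import all_boot all_order all_algebra.
From mathcomp Require Import all_classical all_reals all_analysis.
Set Implicit Arguments. Unset Strict Implicit. Unset Printing Implicit Defensive.
Import Order.TTheory GRing.Theory Num.Theory.
Import numFieldNormedType.Exports.
Local Open Scope classical_set_scope.
Local Open Scope ring_scope.

Section MDP.
Context {R : realType} {dS dA : measure_display}
  (S : measurableType dS) (A : measurableType dA)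
  (P : R.-pker (S * A)%type ~> S)
  (pi : R.-pker S ~> A).

Definition stepT (f : S -> R) (s : S) : R :=
  \int[pi s]_(a in setT) \int[P (s, a)]_(s' in setT) f s'.

(* E[f(s_t) | s_0 = s] under the trajectory law rho^pi(s) *)
Definition iterT (t : nat) (f : S -> R) : S -> R := iter t stepT f.

Definition rpi (r : S * A -> R) (s : S) : R :=
  \int[pi s]_(a in setT) r (s, a).

Definition value (rew : S * A -> R) (disc : R) (s : S) : R :=
  limn (fun n : nat => \sum_(t < n) (disc ^+ t * iterT t (rpi rew) s)).

Definition at_dist (d : probability S R) (V : S -> R) : R :=
  \int[d]_(s in setT) V s.

(* E_{s~d_t^pi}[f(s)], d_t^pi the law of s_t under rho^pi(d0) *)
Definition dt_exp (d0 : probability S R) (t : nat) (f : S -> R) : R :=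
  at_dist d0 (iterT t f).

(* E_{s~d^pi}[f(s)],  d^pi = (1-gamma) sum_t gamma^t d_t^pi *)
Definition occ_exp (d0 : probability S R) (gamma : R) (f : S -> R) : R :=
  (1 - gamma) * limn (fun n : nat => \sum_(t < n) (gamma ^+ t * dt_exp d0 t f)).

(* E_{(s,a)~d^pi} E_{s'~P(.|s,a)} [g(s')] *)
Definition occ_next_exp (d0 : probability S R) (gamma : R) (g : S -> R) : R :=
  occ_exp d0 gamma (stepT g).

Definition reshaped_reward (r : S * A -> R) (h : S -> R) (lambda gamma : R)
  (sa : S * A) : R :=
  r sa + (1 - lambda) * gamma * \int[P sa]_(s' in setT) h s'.

End MDP.

(* Main.v *)
Require Import Defs.
From HB Require Import structures.
From mathcomp Require Import all_boot all_order all_algebra.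
From mathcomp Require Import all_classical all_reals all_analysis.
From mathcomp Require Import measurable_realfun lra ring.
Import Order.TTheory GRing.Theory Num.Theory.
Import numFieldNormedType.Exports.
Local Open Scope classical_set_scope.
Local Open Scope ring_scope.

Section ProbLemmas.
Context {R : realType} {d : measure_display} {T : measurableType d}
  (mu : {measure set T -> \bar R}) (mu1 : mu setT = 1%E).

Lemma int_good (f : T -> R) M : measurable_fun setT f ->
  (forall x, `|f x| <= M) -> mu.-integrable setT (EFin \o f).
Proof.
move=> mf bf; apply: measurable_bounded_integrable => //.
  by rewrite mu1 ltry.
exists M; split; first exact: num_real.
by move=> N hN x _; apply: le_trans (bf x) (ltW hN).
Qed.

Lemma Rint_cst (c : R) : \int[mu]_(x in setT) c = c.
Proof. by rewrite Rintegral_cst // mu1 /= mulr1. Qed.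

Lemma Rint_lin (f g : T -> R) M N a b : measurable_fun setT f ->
  (forall x, `|f x| <= M) -> measurable_fun setT g -> (forall x, `|g x| <= N) ->
  \int[mu]_(x in setT) (a * f x + b * g x) =
  a * \int[mu]_(x in setT) f x + b * \int[mu]_(x in setT) g x.
Proof.
move=> mf bf mg bg.
rewrite RintegralD //.
- by rewrite !RintegralZl //; [exact: int_good mg bg| exact: int_good mf bf].
- apply: (@int_good _ (`|a| * M)); first exact: measurable_funM.
  by move=> x; rewrite normrM ler_wpM2l.
- apply: (@int_good _ (`|b| * N)); first exact: measurable_funM.
  by move=> x; rewrite normrM ler_wpM2l.
Qed.

Lemma Rint_bnd (f : T -> R) M : measurable_fun setT f ->
  (forall x, `|f x| <= M) -> `| \int[mu]_(x in setT) f x | <= M.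
Proof.
move=> mf bf; apply: le_trans (le_normr_Rintegral _ _) _ => //.
  exact: int_good mf bf.
rewrite -[leRHS](Rint_cst M); apply: le_Rintegral => //.
- apply: (@int_good _ M); first exact: measurableT_comp.
  by move=> x; rewrite normr_id.
- apply: (@int_good _ `|M|) => //; exact: measurable_cst.
Qed.

End ProbLemmas.

Section KernelLemmas.
Context {R : realType} {d d' : measure_display} {X : measurableType d}
  {Y : measurableType d'} (k : R.-pker X ~> Y).

Lemma kernel_meas (G : X * Y -> R) M : measurable_fun setT G ->
  (forall z, `|G z| <= M) ->
  measurable_fun setT (fun x => \int[k x]_(y in setT) G (x, y)).
Proof.
move=> mG bG.
have mGx x : measurable_fun setT (fun y => G (x, y)).
  by apply: measurableT_comp => //=; exact: measurable_pair1.
have E x : \int[k x]_(y in setT) G (x, y) =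
    fine (\int[k x]_(y in setT) ((G (x, y) + M)%:E))%E - M.
  have := @Rint_lin _ _ _ (k x) (prob_kernel x) (fun y => G (x, y))
    (fun _ => 1) M 1 1 M (mGx x) (fun y => bG (x, y)) (measurable_cst _)
    (fun y => ltac:(by rewrite normr1)).
  rewrite (Rint_cst (k x) (prob_kernel x)) ?mul1r ?mulr1.
  under eq_Rintegral do rewrite ?mul1r ?mulr1.
  by move=> H; rewrite /Rintegral in H *; rewrite H addrK.
rewrite (funext E); apply: measurable_funB; last exact: measurable_cst.
apply: (measurableT_comp (fine_measurable measurableT)).
apply: (measurable_fun_integral_finite_kernel (fun z => (G z + M)%:E) k).
  move=> z; rewrite lee_fin.
  have := bG z; rewrite ler_norml => /andP[h _]; lra.
by apply/measurable_EFinP; apply: measurable_funD => //; exact: measurable_cst.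
Qed.

End KernelLemmas.


Section Seq.
Context {R : realType}.
Implicit Types (c a b M : R) (y z : nat -> R).

Definition ps c y (n : nat) : R := \sum_(t < n) (c ^+ t * y t).

Lemma ps_cvg c y M : 0 <= c < 1 -> (forall t, `|y t| <= M) -> cvgn (ps c y).
Proof.
move=> /andP[c0 c1] yM.
have M0 : 0 <= M by apply: le_trans (yM 0%N).
have -> : ps c y = series (fun t => c ^+ t * y t).
  by apply/funext => n; rewrite /ps /series /= big_mkord.
apply: (@normed_cvg _ R^o).
apply: (@series_le_cvg _ _ (geometric M c)).
- by move=> n; exact: normr_ge0.
- by move=> n; rewrite /geometric /= mulr_ge0 // exprn_ge0.
- move=> n; rewrite /geometric /= normrM normrX (ger0_norm c0) mulrC.
  by rewrite ler_wpM2r // exprn_ge0.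
- by apply: is_cvg_geometric_series; rewrite ger0_norm.
Qed.

Lemma ps_lin c y z a b n :
  ps c (fun t => a * y t + b * z t) n = a * ps c y n + b * ps c z n.
Proof.
rewrite /ps !mulr_sumr -big_split /=; apply: eq_bigr => i _; ring.
Qed.

Lemma ps_lim_lin c y z a b M N : 0 <= c < 1 ->
  (forall t, `|y t| <= M) -> (forall t, `|z t| <= N) ->
  limn (ps c (fun t => a * y t + b * z t)) =
  a * limn (ps c y) + b * limn (ps c z).
Proof.
move=> hc hy hz; apply: cvg_lim => //.
rewrite (_ : ps c _ = fun n => a * ps c y n + b * ps c z n); last first.
  by apply/funext => n; rewrite ps_lin.
apply: cvgD; apply: cvgMr; [exact: ps_cvg hc hy|exact: ps_cvg hc hz].
Qed.

Lemma ps_S c y n : ps c y n.+1 = y 0%N + c * ps c (fun t => y t.+1) n.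
Proof.
rewrite /ps big_ord_recl /= expr0 mul1r mulr_sumr; congr (_ + _).
by apply: eq_bigr => i _; rewrite /bump /= add1n exprS mulrA.
Qed.

Lemma ps_shift c y M : 0 <= c < 1 -> (forall t, `|y t| <= M) ->
  limn (ps c y) = y 0%N + c * limn (ps c (fun t => y t.+1)).
Proof.
move=> hc hy; apply: cvg_lim => //.
rewrite -cvg_shiftS /=.
rewrite (_ : (fun n => ps c y n.+1) = fun n => y 0%N + c * ps c (fun t => y t.+1) n); last first.
  by apply/funext => n; rewrite ps_S.
apply: cvgD; first exact: cvg_cst.
by apply: cvgMr; apply: (@ps_cvg c _ M hc) => t; exact: hy.
Qed.

Lemma ps_diff c y n m : (n <= m)%N ->
  ps c y m - ps c y n = \sum_(n <= t < m) (c ^+ t * y t).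
Proof.
move=> nm; rewrite /ps -!(big_mkord xpredT (fun t => c ^+ t * y t)).
by rewrite (@big_cat_nat _ _ _ n 0 m _ _ (leq0n n) nm) /= addrC addrK.
Qed.

Lemma ps_tail c y M : 0 <= c < 1 -> (forall t, `|y t| <= M) -> forall n,
  `|limn (ps c y) - ps c y n| <= limn (ps c (fun _ => M)) - ps c (fun _ => M) n.
Proof.
move=> hc hy n.
have cy := @ps_cvg c y M hc hy.
have hM : forall t : nat, `|(fun _ : nat => M) t| <= `|M| by move=> t.
have cM := @ps_cvg c _ _ hc hM.
have cA : (fun m => `|ps c y m - ps c y n|) @ \oo --> `|limn (ps c y) - ps c y n|.
  by apply: cvg_norm; apply: cvgB => //; exact: cvg_cst.
have cB : (fun m => ps c (fun _ => M) m - ps c (fun _ => M) n) @ \oo -->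
    limn (ps c (fun _ => M)) - ps c (fun _ => M) n.
  by apply: cvgB => //; exact: cvg_cst.
rewrite -(cvg_lim _ cA) // -(cvg_lim _ cB) //.
apply: ler_lim; [by apply/cvg_ex; eexists; exact: cA|by apply/cvg_ex; eexists; exact: cB|].
exists n => // m /= nm.
rewrite !ps_diff //; apply: le_trans (ler_norm_sum _ _ _) _.
apply: ler_sum => t _; rewrite normrM normrX.
move: hc => /andP[c0 _]; rewrite (ger0_norm c0).
by rewrite ler_wpM2l // exprn_ge0.
Qed.

Lemma tail_to0 c M : 0 <= c < 1 ->
  (fun n => limn (ps c (fun _ => M)) - ps c (fun _ => M) n) @ \oo --> 0.
Proof.
move=> hc.
have hM : forall t : nat, `|(fun _ : nat => M) t| <= `|M| by move=> t.
have cM := @ps_cvg c _ _ hc hM.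
rewrite -(subrr (limn (ps c (fun _ => M)))).
by apply: cvgB => //; exact: cvg_cst.
Qed.

Lemma cvg_by_bound (u e : nat -> R) (a : R) :
  (forall n, `|a - u n| <= e n) -> e @ \oo --> 0 -> u @ \oo --> a.
Proof.
move=> hb he.
have h0 : (fun n => `|a - u n|) @ \oo --> 0.
  apply: (@squeeze_cvgr _ _ _ _ (fun _ => 0) e) => //; last exact: cvg_cst.
  by near=> n; rewrite normr_ge0 hb.
have h1 : (fun n => a - u n) @ \oo --> 0 by apply: norm_cvg0.
have -> : u = fun n => a - (a - u n) by apply/funext => n; rewrite opprB addrC subrK.
rewrite -[X in _ --> X]subr0; apply: cvgB => //; exact: cvg_cst.
Unshelve. all: by end_near.
Qed.

End Seq.


Section MDPL.
Context {R : realType} {dS dA : measure_display}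
  (S : measurableType dS) (A : measurableType dA)
  (P : R.-pker (S * A)%type ~> S) (pi : R.-pker S ~> A).

Definition good (f : S -> R) :=
  measurable_fun setT f /\ exists M, forall x, `|f x| <= M.

Lemma good_lin (f g : S -> R) (a b : R) : good f -> good g -> good (fun x => a * f x + b * g x).
Proof.
move=> [mf [M hM]] [mg [N hN]]; split.
  by apply: measurable_funD; apply: measurable_funM => //; exact: measurable_cst.
exists (`|a| * M + `|b| * N) => x.
apply: le_trans (ler_normD _ _) _; rewrite !normrM.
by apply: lerD; apply: ler_wpM2l.
Qed.

Definition inner (f : S -> R) (z : S * A) : R := \int[P z]_(s' in setT) f s'.

Lemma inner_meas (f : S -> R) (M : R) : measurable_fun setT f -> (forall x, `|f x| <= M) ->
  measurable_fun setT (inner f).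
Proof.
move=> mf bf.
apply: (@kernel_meas _ _ _ _ _ P (fun zz => f zz.2) M).
  exact: measurableT_comp mf measurable_snd.
by move=> z; exact: bf.
Qed.

Lemma inner_bnd (f : S -> R) (M : R) : measurable_fun setT f -> (forall x, `|f x| <= M) ->
  forall z, `|inner f z| <= M.
Proof. by move=> mf bf z; apply: (Rint_bnd (P z) (prob_kernel z)). Qed.

Lemma step_meas (f : S -> R) (M : R) : measurable_fun setT f -> (forall x, `|f x| <= M) ->
  measurable_fun setT (stepT P pi f).
Proof.
move=> mf bf.
apply: (@kernel_meas _ _ _ _ _ pi (inner f) M).
  exact: inner_meas mf bf.
exact: inner_bnd mf bf.
Qed.

Lemma step_bnd (f : S -> R) (M : R) : measurable_fun setT f -> (forall x, `|f x| <= M) ->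
  forall s, `|stepT P pi f s| <= M.
Proof.
move=> mf bf s; apply: (Rint_bnd (pi s) (prob_kernel s)).
  exact (measurableT_comp (inner_meas _ _ mf bf) (pair1_measurable s)).
by move=> a; exact: inner_bnd mf bf (s, a).
Qed.

Lemma step_good (f : S -> R) : good f -> good (stepT P pi f).
Proof.
move=> [mf [M bf]]; split; first exact: step_meas mf bf.
by exists M; exact: step_bnd mf bf.
Qed.

Lemma step_lin (f g : S -> R) (a b : R) : good f -> good g -> forall s,
  stepT P pi (fun x => a * f x + b * g x) s =
  a * stepT P pi f s + b * stepT P pi g s.
Proof.
move=> [mf [M bf]] [mg [N bg]] s.
rewrite /stepT.
have E : forall a0, inner (fun x => a * f x + b * g x) (s, a0) =
    a * inner f (s, a0) + b * inner g (s, a0).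
  by move=> a0; rewrite /inner (Rint_lin (P (s, a0)) (prob_kernel (s, a0)) f g M N a b mf bf mg bg).
transitivity (\int[pi s]_(a0 in setT) (a * inner f (s, a0) + b * inner g (s, a0))).
  by apply: eq_Rintegral => a0 _; exact: E.
apply: (Rint_lin (pi s) (prob_kernel s)).
- exact (measurableT_comp (inner_meas _ _ mf bf) (pair1_measurable s)).
- by move=> a0; exact: inner_bnd mf bf (s, a0).
- exact (measurableT_comp (inner_meas _ _ mg bg) (pair1_measurable s)).
- by move=> a0; exact: inner_bnd mg bg (s, a0).
Qed.

Lemma iterS_fun t (f : S -> R) : iterT P pi t.+1 f = stepT P pi (iterT P pi t f).
Proof. by rewrite /iterT iterS. Qed.

Lemma iterSr_fun t (f : S -> R) : iterT P pi t.+1 f = iterT P pi t (stepT P pi f).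
Proof. by rewrite /iterT iterSr. Qed.

Lemma iter_good t (f : S -> R) : good f -> good (iterT P pi t f).
Proof.
move=> gf; elim: t => [//|t IH]; rewrite iterS_fun; exact: step_good.
Qed.

Lemma iter_bnd t (f : S -> R) (M : R) : measurable_fun setT f -> (forall x, `|f x| <= M) ->
  forall s, `|iterT P pi t f s| <= M.
Proof.
move=> mf bf; elim: t => [//|t IH] s; rewrite iterS_fun.
have [mi _] := @iter_good t f (conj mf (ex_intro _ M bf)).
exact: (step_bnd _ _ mi IH).
Qed.

Lemma iter_lin t (f g : S -> R) (a b : R) : good f -> good g ->
  iterT P pi t (fun x => a * f x + b * g x) =
  (fun x => a * iterT P pi t f x + b * iterT P pi t g x).
Proof.
move=> gf gg; elim: t => [//|t IH]; rewrite !iterS_fun IH.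
by apply/funext => s; rewrite step_lin //; exact: iter_good.
Qed.

End MDPL.
Arguments good {R dS S}.


Section Bell.
Context {R : realType} {dS dA : measure_display}
  (S : measurableType dS) (A : measurableType dA)
  (P : R.-pker (S * A)%type ~> S) (pi : R.-pker S ~> A)
  (rho : S -> R) (M : R) (mrho : measurable_fun setT rho)
  (brho : forall x, `|rho x| <= M) (c : R) (hc : 0 <= c < 1).

Definition Vf (s : S) : R := limn (ps c (fun t => iterT P pi t rho s)).
Definition Pn (n : nat) (s : S) : R := ps c (fun t => iterT P pi t rho s) n.
Definition en (n : nat) : R := limn (ps c (fun _ => M)) - ps c (fun _ => M) n.

Let grho : good rho := conj mrho (ex_intro _ M brho).
Let ib t s : `|iterT P pi t rho s| <= M :=
  @iter_bnd _ _ _ S A P pi t rho M mrho brho s.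

Lemma PnS n : Pn n.+1 = fun s => 1 * Pn n s + c ^+ n * iterT P pi n rho s.
Proof. by apply/funext => s; rewrite /Pn /ps big_ord_recr /= mul1r. Qed.

Lemma Pn0 : Pn 0 = fun _ => 0.
Proof. by apply/funext => s; rewrite /Pn /ps big_ord0. Qed.

Lemma Pn_good n : good (Pn n).
Proof.
elim: n => [|n IH].
  rewrite Pn0; split; first exact: measurable_cst.
  by exists 0 => x; rewrite normr0.
rewrite PnS; apply: good_lin => //; exact: iter_good.
Qed.

Lemma Vf_tail s n : `|Vf s - Pn n s| <= en n.
Proof.
apply: (@ps_tail _ c _ M hc) => t; exact: ib.
Qed.

Lemma Vf_good : good Vf.
Proof.
split.
  apply: (@measurable_fun_cvg _ _ _ _ Pn Vf).
    by move=> m; have [] := Pn_good m.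
  move=> x _; apply: (@ps_cvg _ c _ M hc) => t.
  exact: ib.
exists (en 0) => s; have := Vf_tail s 0; by rewrite Pn0 subr0.
Qed.

Lemma step_Pn n s : stepT P pi (Pn n) s = ps c (fun t => stepT P pi (iterT P pi t rho) s) n.
Proof.
elim: n => [|n IH].
  rewrite Pn0 /ps big_ord0.
  have := @step_lin _ _ _ S A P pi (fun _ => 0) (fun _ => 0) 0 0.
  rewrite !mul0r addr0 => -> //; last 2 first.
  - by split; [exact: measurable_cst|exists 0 => x; rewrite normr0].
  - by split; [exact: measurable_cst|exists 0 => x; rewrite normr0].
  by rewrite !mul0r addr0.
rewrite PnS step_lin //; last exact: iter_good; last exact: Pn_good.
by rewrite IH mul1r /ps big_ord_recr.
Qed.

Lemma bellman s : Vf s = rho s + c * stepT P pi Vf s.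
Proof.
rewrite /Vf (@ps_shift _ c _ M hc); last by move=> t; exact: ib.
congr (_ + c * _).
have -> : (fun t => iterT P pi t.+1 rho s) =
    fun t => stepT P pi (iterT P pi t rho) s.
  by apply/funext => t; rewrite iterS_fun.
apply: cvg_lim => //.
apply: (@cvg_by_bound _ _ en).
  move=> n; rewrite -step_Pn.
  have := @step_lin _ _ _ S A P pi Vf (Pn n) 1 (-1) Vf_good (Pn_good n) s.
  rewrite !mul1r !mulN1r => <-.
  have [mVP _] := @good_lin _ _ S Vf (Pn n) 1 (-1) Vf_good (Pn_good n).
  apply: (@step_bnd _ _ _ S A P pi _ (en n) mVP _ s) => x.
  by rewrite mul1r mulN1r; exact: Vf_tail.
exact: tail_to0.
Qed.

End Bell.


Section Fin.
Context {R : realType} {dS dA : measure_display}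
  (S : measurableType dS) (A : measurableType dA)
  (P : R.-pker (S * A)%type ~> S) (pi : R.-pker S ~> A) (d0 : probability S R).

Lemma Dlin t (f g : S -> R) a b : good f -> good g ->
  dt_exp P pi d0 t (fun x => a * f x + b * g x) =
  a * dt_exp P pi d0 t f + b * dt_exp P pi d0 t g.
Proof.
move=> gf gg; rewrite /dt_exp /at_dist iter_lin //.
have [mf [M bf]] := iter_good S A P pi t f gf.
have [mg [N bg]] := iter_good S A P pi t g gg.
exact: (Rint_lin d0 (probability_setT d0) _ _ M N a b mf bf mg bg).
Qed.

Lemma Dstep t (f : S -> R) : dt_exp P pi d0 t (stepT P pi f) = dt_exp P pi d0 t.+1 f.
Proof. by rewrite /dt_exp iterSr_fun. Qed.

Lemma Dbnd (f : S -> R) : good f -> exists M, forall t, `|dt_exp P pi d0 t f| <= M.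
Proof.
move=> [mf [M bf]]; exists M => t.
have [mi _] := iter_good S A P pi t f (conj mf (ex_intro _ M bf)).
apply: (Rint_bnd d0 (probability_setT d0) _ M mi).
exact: (iter_bnd S A P pi t f M mf bf).
Qed.

End Fin.

Section Alg.
Context {R : realType}.
Lemma final_alg (g l Y0 X0 Z0 sr sH1 sZ1 sX1 sY1 sY sX sZ : R) : g != 1 ->
  sY = Y0 + g * sY1 -> sY = sr + g * sY1 ->
  sX = X0 + g * sX1 -> sX = sr + (1 - l) * g * sH1 + l * g * sX1 ->
  sZ = Z0 + g * sZ1 ->
  Z0 - Y0 = g * (1 - l) / (1 - g) * ((1 - g) * (sH1 - sZ1)) + l * (Z0 - X0)
    + (1 - l) / (1 - g) * ((1 - g) * sZ - (1 - g) * sX).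
Proof.
move=> g1 e1 e2 e3 e4 e5.
have Y0e : Y0 = sr by apply: (addIr (g * sY1)); rewrite -e1 -e2.
have X0e : X0 = sr + (1 - l) * g * sH1 + l * g * sX1 - g * sX1.
  by rewrite -e4 e3 addrK.
have g1' : 1 - g != 0 by rewrite subr_eq0 eq_sym.
rewrite Y0e e5 e3 X0e; field; exact: g1'.
Qed.
End Alg.


Lemma bounded_good {R : realType} {dS : measure_display} (S : measurableType dS)
  (f : S -> R) : measurable_fun setT f -> bounded_fun f -> good f.
Proof.
move=> mf [M [_ HM]]; split => //; exists (M + 1) => x.
by apply: HM => //; rewrite ltrDl.
Qed.

Section Help.
Context {R : realType}.
Lemma alg3 (a b c k : R) : 1 * (1 * a + k * b) + c = 1 * a + 1 * (k * b + c).
Proof. by ring. Qed.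
Lemma add_mul1 (a b : R) : 1 * a + b = a + b.
Proof. by rewrite mul1r. Qed.
Lemma alg_e4 (a u v k b : R) : 1 * a + 1 * (k * u + b * v) = a + k * u + b * v.
Proof. by ring. Qed.
Lemma alg_eO (a b : R) : 1 * a + (-1) * b = a - b.
Proof. by ring. Qed.
Lemma alg_fun (h V : R) : h - V = 1 * h + (-1) * V.
Proof. by ring. Qed.
Lemma bnd2 (k b u v MH MX : R) : `|u| <= MH -> `|v| <= MX ->
  `|k * u + b * v| <= `|k| * MH + `|b| * MX.
Proof.
move=> hu hv; apply: le_trans (ler_normD _ _) _; rewrite !normrM.
by apply: lerD; apply: ler_wpM2l.
Qed.
End Help.

Theorem mainTheorem8 (R : realType) (dS dA : measure_display)
  (S : measurableType dS) (A : measurableType dA)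
  (P : R.-pker (S * A)%type ~> S) (r : S * A -> R) (gamma : R)
  (h : S -> R) (lambda : R)
  (pi : R.-pker S ~> A) (d0 : probability S R) (V : S -> R) :
  measurable_fun setT r -> (forall sa, 0 <= r sa <= 1) ->
  0 <= gamma < 1 ->
  measurable_fun setT h -> bounded_fun h ->
  0 <= lambda <= 1 ->
  measurable_fun setT V -> bounded_fun V ->
  let Vpi := value P pi r gamma in
  let Vtil := value P pi (reshaped_reward P r h lambda gamma) (lambda * gamma) in
  at_dist d0 V - at_dist d0 Vpi =
    gamma * (1 - lambda) / (1 - gamma) *
      occ_next_exp P pi d0 gamma (fun s' => h s' - V s')
  + lambda * (at_dist d0 V - at_dist d0 Vtil)
  + (1 - lambda) / (1 - gamma) *
      (occ_exp P pi d0 gamma V - occ_exp P pi d0 gamma Vtil).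
Proof.
move=> mr br hg mh bh /andP[l0 l1] mV bV; cbv zeta.
have /andP[g0 g1] := hg.
have hb : 0 <= lambda * gamma < 1.
  rewrite mulr_ge0 //=; apply: le_lt_trans g1.
  by rewrite -[leRHS]mul1r ler_wpM2r.
have gh : good h := bounded_good S h mh bh.
have gV : good V := bounded_good S V mV bV.
have [mh' [Mh bh']] := gh.
set rho := rpi pi r.
have br1 : forall z, `|r z| <= 1.
  by move=> z; have /andP[r0 r1] := br z; rewrite ger0_norm.
have grho : good rho.
  split; first exact: (kernel_meas pi r 1 mr br1).
  exists 1 => s; apply: (Rint_bnd (pi s) (prob_kernel s) _ 1).
    exact: (measurableT_comp mr (pair1_measurable s)).
  by move=> a; exact: br1.
set k := (1 - lambda) * gamma.
set rho_t := fun s => 1 * rho s + k * stepT P pi h s.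
have rrE : rpi pi (reshaped_reward P r h lambda gamma) = rho_t.
  apply/funext => s; rewrite /rpi /reshaped_reward /rho_t /rho /rpi /stepT.
  transitivity (\int[pi s]_(a in setT) (1 * r (s, a) + k * inner S A P h (s, a))).
    by apply: eq_Rintegral => a _; rewrite mul1r.
  apply: (Rint_lin (pi s) (prob_kernel s) _ _ 1 Mh).
  - exact: (measurableT_comp mr (pair1_measurable s)).
  - by move=> a; exact: br1.
  - exact: (measurableT_comp (inner_meas S A P h Mh mh' bh') (pair1_measurable s)).
  - by move=> a; exact: (inner_bnd S A P h Mh mh' bh').
have rrV : value P pi (reshaped_reward P r h lambda gamma) (lambda * gamma) =
    Vf S A P pi rho_t (lambda * gamma) by rewrite /value rrE.
rewrite rrV.
have grt : good rho_t := good_lin S _ _ 1 k grho (step_good S A P pi h gh).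
have [mrho [Mr brho]] := grho.
have [mrt [Mt brt]] := grt.
set VP := value P pi r gamma.
set VT := Vf S A P pi rho_t (lambda * gamma).
have gVP : good VP := Vf_good S A P pi rho Mr mrho brho gamma hg.
have gVT : good VT := Vf_good S A P pi rho_t Mt mrt brt (lambda * gamma) hb.
have bellP : VP = fun x => 1 * rho x + gamma * stepT P pi VP x.
  by apply/funext => x; rewrite mul1r; exact: (bellman S A P pi rho Mr mrho brho gamma hg x).
have bellT : VT = fun x => 1 * rho_t x + (lambda * gamma) * stepT P pi VT x.
  by apply/funext => x; rewrite mul1r; exact: (bellman S A P pi rho_t Mt mrt brt (lambda * gamma) hb x).
have kdef : k = (1 - lambda) * gamma by [].
have rtdef : rho_t = fun s => 1 * rho s + k * stepT P pi h s by [].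
clearbody VP VT rho_t k rho.
have [MY bY] := Dbnd S A P pi d0 VP gVP.
have [MX bX] := Dbnd S A P pi d0 VT gVT.
have [MZ bZ] := Dbnd S A P pi d0 V gV.
have [MH bH] := Dbnd S A P pi d0 h gh.
have [MD bD] := Dbnd S A P pi d0 rho grho.
have fY : forall t, dt_exp P pi d0 t VP = 1 * dt_exp P pi d0 t rho + gamma * dt_exp P pi d0 t.+1 VP.
  move=> t; rewrite {1}bellP.
  rewrite (Dlin S A P pi d0 t _ _ 1 gamma grho (step_good S A P pi VP gVP)).
  by rewrite Dstep.
have fX : forall t, dt_exp P pi d0 t VT = 1 * dt_exp P pi d0 t rho + 1 * (k * dt_exp P pi d0 t.+1 h + (lambda * gamma) * dt_exp P pi d0 t.+1 VT).
  move=> t; rewrite {1}bellT.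
  rewrite (Dlin S A P pi d0 t _ _ 1 (lambda * gamma) grt (step_good S A P pi VT gVT)).
  rewrite Dstep.
  rewrite {1}rtdef (Dlin S A P pi d0 t _ _ 1 k grho (step_good S A P pi h gh)).
  rewrite Dstep.
  exact: alg3.
have fO : forall t, dt_exp P pi d0 t (stepT P pi (fun s' => h s' - V s')) =
    1 * dt_exp P pi d0 t.+1 h + (-1) * dt_exp P pi d0 t.+1 V.
  move=> t; rewrite Dstep.
  rewrite (_ : (fun s' => h s' - V s') = fun x => 1 * h x + (-1) * V x).
    by rewrite (Dlin S A P pi d0 t.+1 h V 1 (-1) gh gV).
  by apply/funext => x; exact: alg_fun.
have e1 := ps_shift gamma (fun t => dt_exp P pi d0 t VP) MY hg bY.
have e2 : limn (ps gamma (fun t => dt_exp P pi d0 t VP)) =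
    limn (ps gamma (fun t => dt_exp P pi d0 t rho)) +
    gamma * limn (ps gamma (fun t => dt_exp P pi d0 t.+1 VP)).
  rewrite {1}(funext fY) (ps_lim_lin _ _ _ _ _ MD MY hg bD); last by move=> t; exact: bY.
  exact: add_mul1.
have e3 := ps_shift gamma (fun t => dt_exp P pi d0 t VT) MX hg bX.
have e4 : limn (ps gamma (fun t => dt_exp P pi d0 t VT)) =
    limn (ps gamma (fun t => dt_exp P pi d0 t rho)) +
    (1 - lambda) * gamma * limn (ps gamma (fun t => dt_exp P pi d0 t.+1 h)) +
    lambda * gamma * limn (ps gamma (fun t => dt_exp P pi d0 t.+1 VT)).
  rewrite {1}(funext fX).
  rewrite (ps_lim_lin _ _ _ _ _ MD (`|k| * MH + `|lambda * gamma| * MX) hg bD).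
    rewrite (ps_lim_lin _ _ _ _ _ MH MX hg); first by rewrite -kdef; exact: alg_e4.
    - by move=> t; exact: bH.
    - by move=> t; exact: bX.
  move=> t /=; apply: bnd2; [exact: bH|exact: bX].
have e5 := ps_shift gamma (fun t => dt_exp P pi d0 t V) MZ hg bZ.
have eO : occ_next_exp P pi d0 gamma (fun s' => h s' - V s') =
    (1 - gamma) * (limn (ps gamma (fun t => dt_exp P pi d0 t.+1 h)) -
                   limn (ps gamma (fun t => dt_exp P pi d0 t.+1 V))).
  rewrite /occ_next_exp /occ_exp.
  have -> : limn (fun n => \sum_(t < n) (gamma ^+ t *
      dt_exp P pi d0 t (stepT P pi (fun s' => h s' - V s')))) =
    limn (ps gamma (fun t => dt_exp P pi d0 t (stepT P pi (fun s' => h s' - V s')))) by [].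
  rewrite (funext fO) (ps_lim_lin _ _ _ _ _ MH MZ hg); first by rewrite alg_eO.
  - by move=> t; exact: bH.
  - by move=> t; exact: bZ.
rewrite eO.
have g1' : gamma != 1 by rewrite lt_eqF.
have F := @final_alg _ gamma lambda _ _ _ _ _ _ _ _ _ _ _ g1' e1 e2 e3 e4 e5.
rewrite /occ_exp.
exact F.
Qed.
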